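(* In the setting described in the context, fix $\mathbf W^{[t]}\in\mathcal B$ with $\mathbf F^{[t]}:=\mathbf F(\mathbf W^{[t]})$ invertible, let $\bm\Phi^{[t]}=(\mathbf F^{[t]})^{-2}$, and let $\xi_k^{[t]},\eta_k^{[t]},\beta_k^{[t]},\bm\Sigma_1^{[t]},\bm\Sigma_2^{[t]},\mathbf Q^{[t]}$ be the quantities of the context evaluated at $\mathbf W^{[t]}$. Define for $\mathbf W=[\mathbf w_{c1},\dots,\mathbf w_{cK},\mathbf W_s]$ $$r_k^{[t]}(\mathbf W)=\log(1+\xi_k^{[t]})+2\Re\{\mathbf h_k^H\mathbf w_{ck}\eta_k^{[t]}\}-\xi_k^{[t]}-\beta_k^{[t]}\Big(\sum_{j=1}^K|\mathbf h_k^H\mathbf w_{cj}|^2+\|\mathbf h_k^H\mathbf W_s\|_F^2+\sigma_{ck}^2\Big).$$ Then the problem $$\max_{\mathbf W\in\mathcal B}\ \delta_c\sum_{k=1}^K r_k^{[t]}(\mathbf W)+\delta_s\big(\mathrm{tr}(\mathbf F(\mathbf W)\bm\Phi^{[t]})-2\,\mathrm{tr}(\mathbf F^{[t]})\big)$$ can be recast as $$\max_{\mathbf W\in\mathcal B}\ 2\delta_c\Re\{\mathrm{tr}(\mathbf W_c\bm\Sigma_1^{[t]}\mathbf H^H)\}+\delta_s\Re\{\mathrm{tr}(\mathbf W\mathbf W^H\mathbf Q^{[t]})\}-\delta_c\,\mathrm{tr}(\mathbf W\mathbf W^H\mathbf H\bm\Sigma_2^{[t]}\mathbf H^H),$$ i.e.,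 the two objectives differ on $\mathcal B$ by a quantity that does not depend on $\mathbf W$.
   Context: Positive integers $N_t,N_r,K,M,L$, nonnegative integer $N_s$; channels $\mathbf h_k\in\mathbb C^{N_t}$, $\mathbf H=[\mathbf h_1,\dots,\mathbf h_K]$, noise variances $\sigma_{ck}^2>0$; $\sigma_s^2>0$; weights $\delta_c,\delta_s\ge0$; $P_t>0$. $\mathbf W=[\mathbf W_c,\mathbf W_s]\in\mathbb C^{N_t\times(K+N_s)}$, $\mathbf W_c=[\mathbf w_{c1},\dots,\mathbf w_{cK}]$, $\mathbf R_x=\mathbf W\mathbf W^H$; $\mathcal B=\{\mathbf W:\mathrm{tr}(\mathbf W\mathbf W^H)=P_t\}$. Sensing model: differentiable $\mathbf a:\mathbb R^2\to\mathbb C^{N_t}$, $\mathbf b:\mathbb R^2\to\mathbb C^{N_r}$; parameters $\theta_m,\phi_m\in\mathbb R,\alpha_m\in\mathbb C$; $\mathbf A=[\mathbf a(\theta_m,\phi_m)]_m$, $\mathbf B=[\mathbf b(\theta_m,\phi_m)]_m$, $\mathbf U=\mathrm{diag}(\alpha_m)$; $\dot{\mathbf A}_\theta,\dot{\mathbf A}_\phi,\dot{\mathbf B}_\theta,\dot{\mathbf B}_\phi$ have $m$-th columns the partial derivatives of $\mathbf a$ resp. $\mathbf b$ with respect to first resp. second argument at $(\theta_m,\phi_m)$. $\mathbf F(\mathbf W)=\frac{2L}{\sigma_s^2}\begin{bmatrix}\Re\mathbf F_{11}&\Re\mathbf F_{12}&\Re\mathbf F_{13}&-\Im\mathbf F_{13}\\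 \Re\mathbf F_{12}^{\mathsf T}&\Re\mathbf F_{22}&\Re\mathbf F_{23}&-\Im\mathbf F_{23}\\ \Re\mathbf F_{13}^{\mathsf T}&\Re\mathbf F_{23}^{\mathsf T}&\Re\mathbf F_{33}&-\Im\mathbf F_{33}\\ -\Im\mathbf F_{13}^{\mathsf T}&-\Im\mathbf F_{23}^{\mathsf T}&-\Im\mathbf F_{33}^{\mathsf T}&\Re\mathbf F_{33}\end{bmatrix}$, with $\mathbf F_{11}=(\mathbf U\mathbf A^H\mathbf R_x\mathbf A\mathbf U^H)^{\mathsf T}\odot(\dot{\mathbf B}_\theta^H\dot{\mathbf B}_\theta)+(\mathbf U\mathbf A^H\mathbf R_x\dot{\mathbf A}_\theta\mathbf U^H)^{\mathsf T}\odot(\mathbf B^H\dot{\mathbf B}_\theta)+(\mathbf U\dot{\mathbf A}_\theta^H\mathbf R_x\mathbf A\mathbf U^H)^{\mathsf T}\odot(\dot{\mathbf B}_\theta^H\mathbf B)+(\mathbf U\dot{\mathbf A}_\theta^H\mathbf R_x\dot{\mathbf A}_\theta\mathbf U^H)^{\mathsf T}\odot(\mathbf B^H\mathbf B)$; $\mathbf F_{12}=(\mathbf U\mathbf A^H\mathbf R_x\mathbf A\mathbf U^H)^{\mathsf T}\odot(\dot{\mathbf B}_\theta^H\dot{\mathbf B}_\phi)+(\mathbf U\mathbf A^H\mathbf R_x\dot{\mathbf A}_\theta\mathbf U^H)^{\mathsf T}\odot(\mathbf B^H\dot{\mathbf B}_\phi)+(\mathbf U\dot{\mathbf A}_\phi^H\mathbf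 R_x\mathbf A\mathbf U^H)^{\mathsf T}\odot(\dot{\mathbf B}_\theta^H\mathbf B)+(\mathbf U\dot{\mathbf A}_\phi^H\mathbf R_x\dot{\mathbf A}_\theta\mathbf U^H)^{\mathsf T}\odot(\mathbf B^H\mathbf B)$; $\mathbf F_{22}$ = $\mathbf F_{11}$ with $\theta$ replaced by $\phi$; $\mathbf F_{13}=(\mathbf A^H\mathbf R_x\mathbf A\mathbf U^H)^{\mathsf T}\odot(\dot{\mathbf B}_\theta^H\mathbf B)+(\mathbf A^H\mathbf R_x\dot{\mathbf A}_\theta\mathbf U^H)^{\mathsf T}\odot(\mathbf B^H\mathbf B)$; $\mathbf F_{23}$ = $\mathbf F_{13}$ with $\theta$ replaced by $\phi$; $\mathbf F_{33}=(\mathbf A^H\mathbf R_x\mathbf A)^{\mathsf T}\odot(\mathbf B^H\mathbf B)$. Communications quantities at $\mathbf W$: $I_k=\sum_{j\ne k}|\mathbf h_k^H\mathbf w_{cj}|^2+\|\mathbf h_k^H\mathbf W_s\|_F^2+\sigma_{ck}^2$, $T_k=I_k+|\mathbf h_k^H\mathbf w_{ck}|^2$, $\xi_k=|\mathbf h_k^H\mathbf w_{ck}|^2/I_k$, $\eta_k=\overline{\mathbf h_k^H\mathbf w_{ck}}/I_k$ (which equals $\xi_k/(\mathbf h_k^H\mathbf w_{ck})$ when the latter is defined), $\beta_k=\xi_k/T_k$, $\bm\Sigma_1=\mathrm{diag}(\eta_1,\dots,\eta_K)$, $\bm\Sigma_2=\mathrm{diag}(\beta_1,\dots,\beta_K)$.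 Sensing quantity at $\mathbf W$ (with $\mathbf F(\mathbf W)$ invertible): $\bm\Phi=\mathbf F(\mathbf W)^{-2}$ (real symmetric), partitioned into $M\times M$ blocks $\bm\Phi_{pq}$, $p,q\in\{1,2,3,4\}$; with $\mathrm j$ the imaginary unit, $\mathbf Q_{11}=\mathbf A\mathbf U^H(\bm\Phi_{11}\odot\dot{\mathbf B}_\theta^H\dot{\mathbf B}_\theta)\mathbf U\mathbf A^H+\dot{\mathbf A}_\theta\mathbf U^H(\bm\Phi_{11}\odot\mathbf B^H\dot{\mathbf B}_\theta)\mathbf U\mathbf A^H+\mathbf A\mathbf U^H(\bm\Phi_{11}\odot\dot{\mathbf B}_\theta^H\mathbf B)\mathbf U\dot{\mathbf A}_\theta^H+\dot{\mathbf A}_\theta\mathbf U^H(\bm\Phi_{11}\odot\mathbf B^H\mathbf B)\mathbf U\dot{\mathbf A}_\theta^H$; $\mathbf Q_{12}=2[\mathbf A\mathbf U^H(\bm\Phi_{12}\odot\dot{\mathbf B}_\theta^H\dot{\mathbf B}_\phi)\mathbf U\mathbf A^H+\dot{\mathbf A}_\theta\mathbf U^H(\bm\Phi_{12}\odot\mathbf B^H\dot{\mathbf B}_\phi)\mathbf U\mathbf A^H+\mathbf A\mathbf U^H(\bm\Phi_{12}\odot\dot{\mathbf B}_\theta^H\mathbf B)\mathbf U\dot{\mathbf A}_\phi^H+\dot{\mathbf A}_\theta\mathbf U^H(\bm\Phi_{12}\odot\mathbf B^H\mathbf B)\mathbf U\dot{\mathbf A}_\phi^H]$; $\mathbf Q_{22}$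 = $\mathbf Q_{11}$ with $\bm\Phi_{11}$ replaced by $\bm\Phi_{22}$ and $\theta$ by $\phi$; $\mathbf Q_{13}=\mathbf A\mathbf U^H((2\bm\Phi_{13}+2\mathrm j\bm\Phi_{14})\odot\dot{\mathbf B}_\theta^H\mathbf B)\mathbf A^H+\dot{\mathbf A}_\theta\mathbf U^H((2\bm\Phi_{13}+2\mathrm j\bm\Phi_{14})\odot\mathbf B^H\mathbf B)\mathbf A^H$; $\mathbf Q_{23}=\mathbf A\mathbf U^H((2\bm\Phi_{23}+2\mathrm j\bm\Phi_{24})\odot\dot{\mathbf B}_\phi^H\mathbf B)\mathbf A^H+\dot{\mathbf A}_\phi\mathbf U^H((2\bm\Phi_{23}+2\mathrm j\bm\Phi_{24})\odot\mathbf B^H\mathbf B)\mathbf A^H$; $\mathbf Q_{33}=\mathbf A((\bm\Phi_{33}+\bm\Phi_{44}+2\mathrm j\bm\Phi_{34})\odot\mathbf B^H\mathbf B)\mathbf A^H$; $\mathbf Q=\frac{2L}{\sigma_s^2}(\mathbf Q_{11}+\mathbf Q_{12}+\mathbf Q_{13}+\mathbf Q_{22}+\mathbf Q_{23}+\mathbf Q_{33})$. *)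

(* Defs.v *)
From HB Require Import structures.
From mathcomp Require Import all_boot all_order all_algebra.
From mathcomp Require Import all_classical all_reals all_analysis.
From mathcomp Require Import complex.

Set Implicit Arguments.
Unset Strict Implicit.
Unset Printing Implicit Defensive.

Import Order.TTheory GRing.Theory Num.Theory.
Local Open Scope ring_scope.
Local Open Scope complex_scope.

Section Defs.
Variable R : realType.
Local Notation C := R[i].

Definition cr (x : R) : C := x%:C.
Definition iu : C := 'i.
Definition nsq (z : C) : R := complex.Re z ^+ 2 + complex.Im z ^+ 2.

Definition hc m n (X : 'M[C]_(m, n)) : 'M[C]_(n, m) := (map_mx conjc X)^T.
Definition had m n (X Y : 'M[C]_(m, n)) : 'M[C]_(m, n) :=
  \matrix_(i, j) (X i j * Y i j).
Definition ReM m n (X : 'M[C]_(m, n)) : 'M[R]_(m, n) := map_mx (@complex.Re R) X.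
Definition ImM m n (X : 'M[C]_(m, n)) : 'M[R]_(m, n) := map_mx (@complex.Im R) X.
Definition crM m n (X : 'M[R]_(m, n)) : 'M[C]_(m, n) := map_mx cr X.

Definition cvec_differentiable n (f : R * R -> 'cV[C]_n) : Prop :=
  forall (i : 'I_n) p,
    differentiable (fun q : R * R => complex.Re (f q i 0)) p /\
    differentiable (fun q : R * R => complex.Im (f q i 0)) p.

Definition pd1 n (f : R * R -> 'cV[C]_n) (p : R * R) : 'cV[C]_n :=
  \col_i (cr (derive1 (fun x : R => complex.Re (f (x, p.2) i 0)) p.1)
          + iu * cr (derive1 (fun x : R => complex.Im (f (x, p.2) i 0)) p.1)).
Definition pd2 n (f : R * R -> 'cV[C]_n) (p : R * R) : 'cV[C]_n :=
  \col_i (cr (derive1 (fun y : R => complex.Re (f (p.1, y) i 0)) p.2)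
          + iu * cr (derive1 (fun y : R => complex.Im (f (p.1, y) i 0)) p.2)).

Variables (M : nat).
Definition stmx n (f : R * R -> 'cV[C]_n) (th ph : 'I_M -> R) : 'M[C]_(n, M) :=
  \matrix_(i, m) f (th m, ph m) i 0.
Definition dstmx1 n (f : R * R -> 'cV[C]_n) (th ph : 'I_M -> R) : 'M[C]_(n, M) :=
  \matrix_(i, m) pd1 f (th m, ph m) i 0.
Definition dstmx2 n (f : R * R -> 'cV[C]_n) (th ph : 'I_M -> R) : 'M[C]_(n, M) :=
  \matrix_(i, m) pd2 f (th m, ph m) i 0.
Definition Umx (alpha : 'I_M -> C) : 'M[C]_M := diag_mx (\row_m alpha m).

Variables (Nt Nr : nat).
Variables (a : R * R -> 'cV[C]_Nt) (b : R * R -> 'cV[C]_Nr).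
Variables (th ph : 'I_M -> R) (alpha : 'I_M -> C) (L : nat) (sigs2 : R).

Local Notation A := (stmx a th ph).
Local Notation Adt := (dstmx1 a th ph).
Local Notation Adp := (dstmx2 a th ph).
Local Notation B := (stmx b th ph).
Local Notation Bdt := (dstmx1 b th ph).
Local Notation Bdp := (dstmx2 b th ph).
Local Notation U := (Umx alpha).

Definition Fpat (Rx : 'M[C]_Nt) (Ad1 Ad2 : 'M[C]_(Nt, M)) (Bd1 Bd2 : 'M[C]_(Nr, M)) :=
    had (U *m hc A *m Rx *m A *m hc U)^T (hc Bd1 *m Bd2)
  + had (U *m hc A *m Rx *m Ad1 *m hc U)^T (hc B *m Bd2)
  + had (U *m hc Ad2 *m Rx *m A *m hc U)^T (hc Bd1 *m B)
  + had (U *m hc Ad2 *m Rx *m Ad1 *m hc U)^T (hc B *m B).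

Definition F11 Rx := Fpat Rx Adt Adt Bdt Bdt.
Definition F12 Rx := Fpat Rx Adt Adp Bdt Bdp.
Definition F22 Rx := Fpat Rx Adp Adp Bdp Bdp.
Definition F13 (Rx : 'M[C]_Nt) :=
    had (hc A *m Rx *m A *m hc U)^T (hc Bdt *m B)
  + had (hc A *m Rx *m Adt *m hc U)^T (hc B *m B).
Definition F23 (Rx : 'M[C]_Nt) :=
    had (hc A *m Rx *m A *m hc U)^T (hc Bdp *m B)
  + had (hc A *m Rx *m Adp *m hc U)^T (hc B *m B).
Definition F33 (Rx : 'M[C]_Nt) := had (hc A *m Rx *m A)^T (hc B *m B).

Definition FIMRx (Rx : 'M[C]_Nt) : 'M[R]_((M + M) + (M + M)) :=
  (2 * L%:R / sigs2) *:
  block_mx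
    (block_mx (ReM (F11 Rx)) (ReM (F12 Rx))
              (ReM (F12 Rx))^T (ReM (F22 Rx)))
    (block_mx (ReM (F13 Rx)) (- ImM (F13 Rx))
              (ReM (F23 Rx)) (- ImM (F23 Rx)))
    (block_mx (ReM (F13 Rx))^T (ReM (F23 Rx))^T
              (- (ImM (F13 Rx))^T) (- (ImM (F23 Rx))^T))
    (block_mx (ReM (F33 Rx)) (- ImM (F33 Rx))
              (- (ImM (F33 Rx))^T) (ReM (F33 Rx))).

Definition FIM p (W : 'M[C]_(Nt, p)) := FIMRx (W *m hc W).

Section Blocks.
Variable Phi : 'M[R]_((M + M) + (M + M)).
Definition Phi11 := ulsubmx (ulsubmx Phi).
Definition Phi12 := ursubmx (ulsubmx Phi).
Definition Phi22 := drsubmx (ulsubmx Phi).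
Definition Phi13 := ulsubmx (ursubmx Phi).
Definition Phi14 := ursubmx (ursubmx Phi).
Definition Phi23 := dlsubmx (ursubmx Phi).
Definition Phi24 := drsubmx (ursubmx Phi).
Definition Phi33 := ulsubmx (drsubmx Phi).
Definition Phi34 := ursubmx (drsubmx Phi).
Definition Phi44 := drsubmx (drsubmx Phi).
End Blocks.

Definition Qpat (X : 'M[C]_M) (Ad1 Ad2 : 'M[C]_(Nt, M)) (Bd1 Bd2 : 'M[C]_(Nr, M)) :=
    A *m hc U *m had X (hc Bd1 *m Bd2) *m U *m hc A
  + Ad1 *m hc U *m had X (hc B *m Bd2) *m U *m hc A
  + A *m hc U *m had X (hc Bd1 *m B) *m U *m hc Ad2
  + Ad1 *m hc U *m had X (hc B *m B) *m U *m hc Ad2.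

Definition Qmx (Phi : 'M[R]_((M + M) + (M + M))) : 'M[C]_Nt :=
  let Q11 := Qpat (crM (Phi11 Phi)) Adt Adt Bdt Bdt in
  let Q12 := 2%:R *: Qpat (crM (Phi12 Phi)) Adt Adp Bdt Bdp in
  let Q22 := Qpat (crM (Phi22 Phi)) Adp Adp Bdp Bdp in
  let X13 := 2%:R *: crM (Phi13 Phi) + (2%:R * iu) *: crM (Phi14 Phi) in
  let Q13 := A *m hc U *m had X13 (hc Bdt *m B) *m hc A
           + Adt *m hc U *m had X13 (hc B *m B) *m hc A in
  let X23 := 2%:R *: crM (Phi23 Phi) + (2%:R * iu) *: crM (Phi24 Phi) in
  let Q23 := A *m hc U *m had X23 (hc Bdp *m B) *m hc A
           + Adp *m hc U *m had X23 (hc B *m B) *m hc A in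
  let X33 := crM (Phi33 Phi) + crM (Phi44 Phi) + (2%:R * iu) *: crM (Phi34 Phi) in
  let Q33 := A *m had X33 (hc B *m B) *m hc A in
  cr (2 * L%:R / sigs2) *: (Q11 + Q12 + Q13 + Q22 + Q23 + Q33).

End Defs.

Section Comm.
Variable R : realType.
Local Notation C := R[i].
Variables (Nt K Ns : nat) (H : 'M[C]_(Nt, K)) (sigc2 : 'I_K -> R).

Definition gain (W : 'M[C]_(Nt, K + Ns)) (k j : 'I_K) : C :=
  (hc H *m lsubmx W) k j.
Definition sens_pow (W : 'M[C]_(Nt, K + Ns)) (k : 'I_K) : R :=
  \sum_(s < Ns) nsq ((hc H *m rsubmx W) k s).
Definition Ik (W : 'M[C]_(Nt, K + Ns)) (k : 'I_K) : R :=
  \sum_(j < K | j != k) nsq (gain W k j) + sens_pow W k + sigc2 k.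
Definition Tk W k : R := Ik W k + nsq (gain W k k).
Definition xik W k : R := nsq (gain W k k) / Ik W k.
Definition etak W k : C := conjc (gain W k k) / cr (Ik W k).
Definition betak W k : R := xik W k / Tk W k.
Definition Sigma1 W : 'M[C]_K := diag_mx (\row_k etak W k).
Definition Sigma2 W : 'M[C]_K := diag_mx (\row_k cr (betak W k)).

Definition rk (Wt W : 'M[C]_(Nt, K + Ns)) (k : 'I_K) : R :=
  ln (1 + xik Wt k) + 2 * complex.Re (gain W k k * etak Wt k) - xik Wt k
  - betak Wt k * (\sum_(j < K) nsq (gain W k j) + sens_pow W k + sigc2 k).
End Comm.

(* Main.v *)
Require Import Defs.
From HB Require Import structures.
From mathcomp Require Import all_boot all_order all_algebra.
From mathcomp Require Import all_classical all_reals all_analysis.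
From mathcomp Require Import complex.
From mathcomp Require Import ring lra.
Import Order.TTheory GRing.Theory Num.Theory.
Local Open Scope ring_scope.
Set Implicit Arguments.
Unset Strict Implicit.

Section Helpers.
Variable R : realType.
Local Notation C := R[i].

Lemma hcM m n p (X : 'M[C]_(m, n)) (Y : 'M[C]_(n, p)) : hc (X *m Y) = hc Y *m hc X.
Proof. by rewrite /hc map_mxM trmx_mul. Qed.

Lemma hcK m n (X : 'M[C]_(m, n)) : hc (hc X) = X.
Proof. by apply/matrixP => i j; rewrite !mxE conjcK. Qed.

Lemma hcD m n (X Y : 'M[C]_(m, n)) : hc (X + Y) = hc X + hc Y.
Proof. by apply/matrixP => i j; rewrite !mxE rmorphD. Qed.

Lemma hc_had m (G Y : 'M[C]_(m, m)) : hc (had G^T Y) = had (hc G)^T (hc Y).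
Proof. by apply/matrixP => i j; rewrite !mxE rmorphM. Qed.

Lemma ReM_hc m n (X : 'M[C]_(m, n)) : Defs.ReM (hc X) = (Defs.ReM X)^T.
Proof. by apply/matrixP => i j; rewrite !mxE; case: (X j i). Qed.

Lemma tr_had m (G Y X : 'M[C]_m) : \tr (had G^T Y *m X^T) = \tr (G *m had X Y).
Proof.
rewrite /mxtrace.
transitivity (\sum_i \sum_j G j i * Y i j * X i j).
  by apply: eq_bigr => i _; rewrite !mxE; apply: eq_bigr => j _; rewrite !mxE.
rewrite exchange_big /=; apply: eq_bigr => i _; rewrite mxE; apply: eq_bigr => j _.
by rewrite !mxE -mulrA [Y _ _ * _]mulrC.
Qed.

Lemma tr_rot n p (P : 'M[C]_(p, n)) (Rx : 'M[C]_n) (S : 'M[C]_(n, p)) (Z : 'M[C]_p) :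
  \tr (P *m Rx *m S *m Z) = \tr (Rx *m (S *m Z *m P)).
Proof. by rewrite -!mulmxA mxtrace_mulC !mulmxA. Qed.

Lemma trterm2 m k n l (P1 : 'M[C]_(m, k)) (P2 : 'M[C]_(k, n)) (Rx : 'M[C]_n)
  (S1 : 'M[C]_(n, l)) (S2 : 'M[C]_(l, m)) (X Y : 'M[C]_m) :
  \tr (Rx *m (S1 *m S2 *m had X Y *m P1 *m P2))
  = \tr (had (P1 *m P2 *m Rx *m S1 *m S2)^T Y *m X^T).
Proof.
by rewrite tr_had -!mulmxA (mxtrace_mulC P1) -!mulmxA (mxtrace_mulC P2) -!mulmxA.
Qed.

Lemma trterm1 m n l (P : 'M[C]_(m, n)) (Rx : 'M[C]_n)
  (S1 : 'M[C]_(n, l)) (S2 : 'M[C]_(l, m)) (X Y : 'M[C]_m) :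
  \tr (Rx *m (S1 *m S2 *m had X Y *m P))
  = \tr (had (P *m Rx *m S1 *m S2)^T Y *m X^T).
Proof.
by rewrite tr_had -!mulmxA (mxtrace_mulC P) -!mulmxA.
Qed.

Lemma trterm0 m n (P : 'M[C]_(m, n)) (Rx : 'M[C]_n)
  (S : 'M[C]_(n, m)) (X Y : 'M[C]_m) :
  \tr (Rx *m (S *m had X Y *m P))
  = \tr (had (P *m Rx *m S)^T Y *m X^T).
Proof.
by rewrite tr_had -!mulmxA (mxtrace_mulC P) -!mulmxA.
Qed.

Lemma Qpat_Fpat M Nt Nr (a : R * R -> 'cV[C]_Nt) (b : R * R -> 'cV[C]_Nr) th ph alpha
  (Rx : 'M[C]_Nt) (X : 'M[C]_M) Ad1 Ad2 Bd1 Bd2 :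
  \tr (Rx *m Qpat a b th ph alpha X Ad1 Ad2 Bd1 Bd2)
  = \tr (Fpat a b th ph alpha Rx Ad1 Ad2 Bd1 Bd2 *m X^T).
Proof.
rewrite /Qpat /Fpat !mulmxDr !mxtraceD.
rewrite !mulmxDl !mxtraceD.
by congr (_ + _ + _ + _); apply: trterm2.
Qed.

Definition frob {m n} (X Y : 'M[R]_(m, n)) : R := \tr (X *m Y^T).

Lemma frob_block m1 m2 n1 n2 (A E : 'M[R]_(m1, n1)) (B F : 'M[R]_(m1, n2))
  (Cm G : 'M[R]_(m2, n1)) (D H : 'M[R]_(m2, n2)) :
  frob (block_mx A B Cm D) (block_mx E F G H)
  = frob A E + frob B F + frob Cm G + frob D H.
Proof.
by rewrite /frob tr_block_mx mulmx_block mxtrace_block !mxtraceD !addrA.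
Qed.

Lemma frob_tr m n (X Y : 'M[R]_(m, n)) : frob X^T Y^T = frob X Y.
Proof. by rewrite /frob trmxK -mxtrace_tr trmx_mul trmxK mxtrace_mulC. Qed.

Lemma frobNl m n (X Y : 'M[R]_(m, n)) : frob (- X) Y = - frob X Y.
Proof. by rewrite /frob mulNmx raddfN. Qed.

Lemma frobZl m n c (X Y : 'M[R]_(m, n)) : frob (c *: X) Y = c * frob X Y.
Proof. by rewrite /frob -scalemxAl mxtraceZ. Qed.

Lemma frobZr m n c (X Y : 'M[R]_(m, n)) : frob X (c *: Y) = c * frob X Y.
Proof. by rewrite /frob linearZ /= -scalemxAr mxtraceZ. Qed.

Lemma frobDr m n (X Y Z : 'M[R]_(m, n)) : frob X (Y + Z) = frob X Y + frob X Z.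
Proof. by rewrite /frob linearD /= mulmxDr mxtraceD. Qed.

Lemma frob0r m n (X : 'M[R]_(m, n)) : frob X 0 = 0.
Proof. by rewrite /frob trmx0 mulmx0 mxtrace0. Qed.

Lemma ReD (x y : C) : complex.Re (x + y) = complex.Re x + complex.Re y.
Proof. by case: x; case: y. Qed.

Lemma Re_sum (I : Type) (r : seq I) (P : pred I) (F : I -> C) :
  complex.Re (\sum_(i <- r | P i) F i) = \sum_(i <- r | P i) complex.Re (F i).
Proof. by apply: (big_morph _ ReD). Qed.

Lemma Re_cr (c : R) (z : C) : complex.Re (cr c * z) = c * complex.Re z.
Proof. by case: z => x y; rewrite /cr /= mul0r subr0. Qed.

Lemma Re_trF m n (F X : 'M[C]_(m, n)) :
  complex.Re (\tr (F *m X^T))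
  = frob (Defs.ReM F) (Defs.ReM X) - frob (Defs.ImM F) (Defs.ImM X).
Proof.
rewrite /frob /mxtrace Re_sum -sumrB; apply: eq_bigr => i _.
rewrite !mxE Re_sum -sumrB; apply: eq_bigr => j _.
by rewrite !mxE; case: (F i j) => x y; case: (X i j).
Qed.

Lemma hcG M Nt (U : 'M[C]_M) (A Ad : 'M[C]_(Nt, M)) (Rx : 'M[C]_Nt) (HR : hc Rx = Rx) :
  hc (U *m hc A *m Rx *m Ad *m hc U) = U *m hc Ad *m Rx *m A *m hc U.
Proof. by rewrite !hcM !hcK HR !mulmxA. Qed.

Lemma hcY M Nr (B Bd : 'M[C]_(Nr, M)) : hc (hc Bd *m B) = hc B *m Bd.
Proof. by rewrite hcM hcK. Qed.

Lemma herm4 M Nt Nr (U : 'M[C]_M) (A Ad : 'M[C]_(Nt, M)) (B Bd : 'M[C]_(Nr, M))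
  (Rx : 'M[C]_Nt) (HR : hc Rx = Rx) :
  let F := had (U *m hc A *m Rx *m A *m hc U)^T (hc Bd *m Bd)
         + had (U *m hc A *m Rx *m Ad *m hc U)^T (hc B *m Bd)
         + had (U *m hc Ad *m Rx *m A *m hc U)^T (hc Bd *m B)
         + had (U *m hc Ad *m Rx *m Ad *m hc U)^T (hc B *m B) in
  hc F = F.
Proof.
rewrite /= !hcD !hc_had.
have e1 := hcG U A A HR. have e2 := hcG U A Ad HR.
have e3 := hcG U Ad A HR. have e4 := hcG U Ad Ad HR.
have y1 := hcY Bd Bd. have y2 := hcY Bd B. have y3 := hcY B Bd. have y4 := hcY B B.
rewrite -!addrA; congr (_ + _); last rewrite addrCA; last congr (_ + (_ + _)).
all: apply: f_equal2; [apply: f_equal|].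
exact: e1. exact: y1. exact: e3. exact: y3. exact: e2. exact: y2. exact: e4. exact: y4.
Qed.

Lemma Fpat_herm M Nt Nr (a : R * R -> 'cV[C]_Nt) (b : R * R -> 'cV[C]_Nr) th ph alpha
  (Rx : 'M[C]_Nt) (HR : hc Rx = Rx) (Ad : 'M[C]_(Nt, M)) (Bd : 'M[C]_(Nr, M)) :
  hc (Fpat a b th ph alpha Rx Ad Ad Bd Bd) = Fpat a b th ph alpha Rx Ad Ad Bd Bd.
Proof. exact: herm4. Qed.

Lemma F33_herm M Nt Nr (a : R * R -> 'cV[C]_Nt) (b : R * R -> 'cV[C]_Nr)
  (th ph : 'I_M -> R) (Rx : 'M[C]_Nt) (HR : hc Rx = Rx) :
  hc (F33 a b th ph Rx) = F33 a b th ph Rx.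
Proof.
rewrite /F33; move: (stmx a th ph) (stmx b th ph) => A B.
by rewrite hc_had !hcM !hcK HR !mulmxA.
Qed.

Lemma Phi_dec M (Phi : 'M[R]_((M + M) + (M + M))) (sym : Phi^T = Phi) :
  Phi = block_mx
    (block_mx (Phi11 Phi) (Phi12 Phi) (Phi12 Phi)^T (Phi22 Phi))
    (block_mx (Phi13 Phi) (Phi14 Phi) (Phi23 Phi) (Phi24 Phi))
    (block_mx (Phi13 Phi)^T (Phi23 Phi)^T (Phi14 Phi)^T (Phi24 Phi)^T)
    (block_mx (Phi33 Phi) (Phi34 Phi) (Phi34 Phi)^T (Phi44 Phi)).
Proof.
have ul : ulsubmx Phi = block_mx (Phi11 Phi) (Phi12 Phi) (Phi12 Phi)^T (Phi22 Phi).
  rewrite -[LHS]submxK; congr block_mx.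
  by rewrite /Phi12 trmx_ursub trmx_ulsub sym.
have dr : drsubmx Phi = block_mx (Phi33 Phi) (Phi34 Phi) (Phi34 Phi)^T (Phi44 Phi).
  rewrite -[LHS]submxK; congr block_mx.
  by rewrite /Phi34 trmx_ursub trmx_drsub sym.
have ur : ursubmx Phi = block_mx (Phi13 Phi) (Phi14 Phi) (Phi23 Phi) (Phi24 Phi).
  by rewrite -[LHS]submxK.
have dl : dlsubmx Phi = block_mx (Phi13 Phi)^T (Phi23 Phi)^T (Phi14 Phi)^T (Phi24 Phi)^T.
  have -> : dlsubmx Phi = (ursubmx Phi)^T by rewrite trmx_ursub sym.
  by rewrite ur tr_block_mx.
by rewrite -[LHS]submxK ul ur dl dr.
Qed.

Lemma tr_frob n (X Phi : 'M[R]_n) : Phi^T = Phi -> \tr (X *m Phi) = frob X Phi.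
Proof. by move=> sym; rewrite /frob sym. Qed.

Lemma Re_2 (z : C) : complex.Re (2%:R * z) = 2 * complex.Re z.
Proof. case: z => x y; rewrite /= addr0 mul0r subr0; congr (_ * _). Qed.

Lemma ReM_crM m n (P : 'M[R]_(m, n)) : Defs.ReM (crM P) = P.
Proof. by apply/matrixP => i j; rewrite !mxE. Qed.

Lemma ImM_crM m n (P : 'M[R]_(m, n)) : Defs.ImM (crM P) = 0.
Proof. by apply/matrixP => i j; rewrite !mxE. Qed.

Lemma ReM_X13 m n (P Q : 'M[R]_(m, n)) :
  Defs.ReM (2%:R *: crM P + (2%:R * iu R) *: crM Q) = 2 *: P.
Proof. apply/matrixP => i j; rewrite !mxE /=; ring. Qed.

Lemma ImM_X13 m n (P Q : 'M[R]_(m, n)) :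
  Defs.ImM (2%:R *: crM P + (2%:R * iu R) *: crM Q) = 2 *: Q.
Proof. apply/matrixP => i j; rewrite !mxE /=; ring. Qed.

Lemma ReM_X33 m n (P Q S : 'M[R]_(m, n)) :
  Defs.ReM (crM P + crM Q + (2%:R * iu R) *: crM S) = P + Q.
Proof. apply/matrixP => i j; rewrite !mxE /=; ring. Qed.

Lemma ImM_X33 m n (P Q S : 'M[R]_(m, n)) :
  Defs.ImM (crM P + crM Q + (2%:R * iu R) *: crM S) = 2 *: S.
Proof. apply/matrixP => i j; rewrite !mxE /=; ring. Qed.

Lemma sens_abstract M (c : R) (F11 F12 F22 F13 F23 F33 : 'M[C]_M)
  (Phi : 'M[R]_((M + M) + (M + M))) (sym : Phi^T = Phi) :
  \tr ((c *: block_mx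
    (block_mx (Defs.ReM F11) (Defs.ReM F12) (Defs.ReM F12)^T (Defs.ReM F22))
    (block_mx (Defs.ReM F13) (- Defs.ImM F13) (Defs.ReM F23) (- Defs.ImM F23))
    (block_mx (Defs.ReM F13)^T (Defs.ReM F23)^T
              (- (Defs.ImM F13)^T) (- (Defs.ImM F23)^T))
    (block_mx (Defs.ReM F33) (- Defs.ImM F33)
              (- (Defs.ImM F33)^T) (Defs.ReM F33))) *m Phi)
  = c * complex.Re (
      \tr (F11 *m (crM (Phi11 Phi))^T)
    + 2%:R * \tr (F12 *m (crM (Phi12 Phi))^T)
    + \tr (F13 *m (2%:R *: crM (Phi13 Phi) + (2%:R * iu R) *: crM (Phi14 Phi))^T)
    + \tr (F22 *m (crM (Phi22 Phi))^T)
    + \tr (F23 *m (2%:R *: crM (Phi23 Phi) + (2%:R * iu R) *: crM (Phi24 Phi))^T)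
    + \tr (F33 *m (crM (Phi33 Phi) + crM (Phi44 Phi) + (2%:R * iu R) *: crM (Phi34 Phi))^T)).
Proof.
rewrite -scalemxAl mxtraceZ tr_frob // {1}(Phi_dec sym).
move: (Phi11 Phi) (Phi12 Phi) (Phi22 Phi) (Phi13 Phi) (Phi14 Phi) (Phi23 Phi)
  (Phi24 Phi) (Phi33 Phi) (Phi34 Phi) (Phi44 Phi) => P11 P12 P22 P13 P14 P23 P24 P33 P34 P44.
rewrite !frob_block !ReD Re_2 !Re_trF.
rewrite !ReM_crM !ImM_crM !ReM_X13 !ImM_X13 ReM_X33 ImM_X33.
rewrite !frob0r !frobZr !frobDr !frobNl !frob_tr.
ring.
Qed.

End Helpers.

Section T.
Variable R : realType.
Local Notation C := R[i].

Lemma Q13_lemma M Nt Nr (U : 'M[C]_M) (A Ad : 'M[C]_(Nt, M)) (B Bd : 'M[C]_(Nr, M))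
  (X : 'M[C]_M) (Rx : 'M[C]_Nt) :
  \tr (Rx *m (A *m hc U *m had X (hc Bd *m B) *m hc A
              + Ad *m hc U *m had X (hc B *m B) *m hc A))
  = \tr ((had (hc A *m Rx *m A *m hc U)^T (hc Bd *m B)
          + had (hc A *m Rx *m Ad *m hc U)^T (hc B *m B)) *m X^T).
Proof.
rewrite mulmxDr mxtraceD mulmxDl mxtraceD; congr (_ + _); apply: trterm1.
Qed.

Lemma Q_side M Nt Nr (a : R * R -> 'cV[C]_Nt) (b : R * R -> 'cV[C]_Nr)
  (th ph : 'I_M -> R) (alpha : 'I_M -> C) (L : nat) (sigs2 : R)
  (Phi : 'M[R]_((M + M) + (M + M))) (Rx : 'M[C]_Nt) :
  \tr (Rx *m Qmx a b th ph alpha L sigs2 Phi)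
  = cr (2 * L%:R / sigs2) * (
      \tr (F11 a b th ph alpha Rx *m (crM (Phi11 Phi))^T)
    + 2%:R * \tr (F12 a b th ph alpha Rx *m (crM (Phi12 Phi))^T)
    + \tr (F13 a b th ph alpha Rx *m (2%:R *: crM (Phi13 Phi) + (2%:R * iu R) *: crM (Phi14 Phi))^T)
    + \tr (F22 a b th ph alpha Rx *m (crM (Phi22 Phi))^T)
    + \tr (F23 a b th ph alpha Rx *m (2%:R *: crM (Phi23 Phi) + (2%:R * iu R) *: crM (Phi24 Phi))^T)
    + \tr (F33 a b th ph Rx *m (crM (Phi33 Phi) + crM (Phi44 Phi) + (2%:R * iu R) *: crM (Phi34 Phi))^T)).
Proof.
rewrite /Qmx /=.
Time rewrite -scalemxAr mxtraceZ; congr (_ * _).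
Time rewrite mulmxDr mxtraceD mulmxDr mxtraceD mulmxDr mxtraceD mulmxDr mxtraceD mulmxDr mxtraceD.
Time congr (_ + _ + _ + _ + _ + _).
- Time exact: Qpat_Fpat.
- Time by rewrite -scalemxAr mxtraceZ Qpat_Fpat.
- Time exact: Q13_lemma.
- Time exact: Qpat_Fpat.
- Time exact: Q13_lemma.
- Time exact: trterm0.
Qed.

Lemma ReM_sym m (F : 'M[C]_m) : hc F = F -> (Defs.ReM F)^T = Defs.ReM F.
Proof. by move=> h; rewrite -ReM_hc h. Qed.

Lemma blk_sym M (c : R) (F11 F12 F22 F13 F23 F33 : 'M[C]_M)
  (h11 : (Defs.ReM F11)^T = Defs.ReM F11) (h22 : (Defs.ReM F22)^T = Defs.ReM F22)
  (h33 : (Defs.ReM F33)^T = Defs.ReM F33) :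
  let B := c *: block_mx
    (block_mx (Defs.ReM F11) (Defs.ReM F12) (Defs.ReM F12)^T (Defs.ReM F22))
    (block_mx (Defs.ReM F13) (- Defs.ImM F13) (Defs.ReM F23) (- Defs.ImM F23))
    (block_mx (Defs.ReM F13)^T (Defs.ReM F23)^T
              (- (Defs.ImM F13)^T) (- (Defs.ImM F23)^T))
    (block_mx (Defs.ReM F33) (- Defs.ImM F33)
              (- (Defs.ImM F33)^T) (Defs.ReM F33)) in
  B^T = B.
Proof.
rewrite /= linearZ /= !tr_block_mx !trmxK !linearN /= !trmxK h11 h22 h33.
done.
Qed.

Lemma hcRx m n (W : 'M[C]_(m, n)) : hc (W *m hc W) = W *m hc W.
Proof. by rewrite hcM hcK. Qed.

Lemma FIM_sym M Nt Nr (a : R * R -> 'cV[C]_Nt) (b : R * R -> 'cV[C]_Nr)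
  (th ph : 'I_M -> R) (alpha : 'I_M -> C) (L : nat) (sigs2 : R) p (W : 'M[C]_(Nt, p)) :
  (FIM a b th ph alpha L sigs2 W)^T = FIM a b th ph alpha L sigs2 W.
Proof.
rewrite /FIM /FIMRx; move: (hcRx W); move: (W *m hc W) => Rx HR.
apply: blk_sym; apply: ReM_sym.
- exact: Fpat_herm.
- exact: Fpat_herm.
- exact: F33_herm.
Qed.

Lemma Phi_sym n (F : 'M[R]_n) : F^T = F -> (invmx F *m invmx F)^T = invmx F *m invmx F.
Proof. by move=> h; rewrite trmx_mul trmx_inv h. Qed.

End T.

Section U.
Variable R : realType.
Local Notation C := R[i].
Lemma crD (x y : R) : cr (x + y) = cr x + cr y.
Proof. by rewrite /cr rmorphD. Qed.

Lemma cr_sum (I : Type) (r : seq I) (P : pred I) (F : I -> R) :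
  cr (\sum_(i <- r | P i) F i) = \sum_(i <- r | P i) cr (F i).
Proof. by apply: (big_morph _ crD); rewrite /cr. Qed.

Lemma conj_nsq (z : C) : z * conjc z = cr (nsq z).
Proof. case: z => x y; rewrite /cr /nsq /=; apply/eqP; rewrite eq_complex /=; apply/andP; split; apply/eqP; ring. Qed.

Lemma comm1 Nt K Ns (H : 'M[C]_(Nt, K)) (sigc2 : 'I_K -> R) (Wt W : 'M[C]_(Nt, K + Ns)) :
  complex.Re (\tr (lsubmx W *m Sigma1 H sigc2 Wt *m hc H))
  = \sum_k complex.Re (gain H W k k * etak H sigc2 Wt k).
Proof.
rewrite /Sigma1 mxtrace_mulC mulmxA mul_mx_diag /mxtrace Re_sum.
apply: eq_bigr => k _; rewrite /gain; congr complex.Re; rewrite mxE; congr (_ * _); by rewrite mxE.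
Qed.

Lemma comm2 Nt K Ns (H : 'M[C]_(Nt, K)) (sigc2 : 'I_K -> R) (Wt W : 'M[C]_(Nt, K + Ns)) :
  \tr (W *m hc W *m H *m Sigma2 H sigc2 Wt *m hc H)
  = cr (\sum_k betak H sigc2 Wt k *
          (\sum_(j < K) nsq (gain H W k j) + sens_pow H W k)).
Proof.
rewrite /Sigma2 mxtrace_mulC !mulmxA mul_mx_diag /mxtrace cr_sum.
apply: eq_bigr => k _; rewrite mxE [X in _ * X]mxE.
have -> : hc H *m W *m hc W *m H = (hc H *m W) *m hc (hc H *m W).
  by rewrite hcM hcK !mulmxA.
rewrite mxE big_split_ord /= mulrC /sens_pow /gain.
rewrite [RHS]/cr rmorphM /=; congr (_ * _); rewrite rmorphD !rmorph_sum /=.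
congr (_ + _); apply: eq_bigr => j _; apply: (etrans _ (conj_nsq _)).
  by rewrite mulmx_lsub; congr (_ * _); rewrite !mxE.
by rewrite mulmx_rsub; congr (_ * _); rewrite !mxE.
Qed.

End U.

Lemma sens_link (R : realType) M Nt Nr (a : R * R -> 'cV[R[i]]_Nt) (b : R * R -> 'cV[R[i]]_Nr)
  (th ph : 'I_M -> R) (alpha : 'I_M -> R[i]) (L : nat) (sigs2 : R) p (Wt W : 'M[R[i]]_(Nt, p)) :
  let Ft := FIM a b th ph alpha L sigs2 Wt in
  let Phit := invmx Ft *m invmx Ft in
  \tr (FIM a b th ph alpha L sigs2 W *m Phit)
  = complex.Re (\tr (W *m hc W *m Qmx a b th ph alpha L sigs2 Phit)).
Proof.
move=> Ft Phit.
have sym : Phit^T = Phit by apply: Phi_sym; apply: FIM_sym.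
rewrite Q_side Re_cr /FIM /FIMRx.
by apply: sens_abstract.
Qed.

Lemma cr_lin (R : realType) (x y z u v w : R) :
  x = y + z - u * v + w -> cr x = cr y + cr z - cr u * cr v + cr w.
Proof. by move=> ->; rewrite /cr rmorphD rmorphB rmorphD rmorphM. Qed.

Unset Implicit Arguments.
Set Strict Implicit.

Theorem proposition2 (R : realType)
  (Nt Nr K M L Ns : nat)
  (HNt : (0 < Nt)%N) (HNr : (0 < Nr)%N) (HK : (0 < K)%N) (HM : (0 < M)%N)
  (HL : (0 < L)%N)
  (H : 'M[R[i]]_(Nt, K)) (sigc2 : 'I_K -> R) (Hsigc : forall k, 0 < sigc2 k)
  (sigs2 : R) (Hsigs : 0 < sigs2)
  (dc ds : R) (Hdc : 0 <= dc) (Hds : 0 <= ds) (Pt : R) (HPt : 0 < Pt)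
  (a : R * R -> 'cV[R[i]]_Nt) (b : R * R -> 'cV[R[i]]_Nr)
  (Ha : cvec_differentiable a) (Hb : cvec_differentiable b)
  (th ph : 'I_M -> R) (alpha : 'I_M -> R[i])
  (Wt : 'M[R[i]]_(Nt, K + Ns))
  (HWt : \tr (Wt *m hc Wt) = cr Pt)
  (HFt : FIM a b th ph alpha L sigs2 Wt \in unitmx) :
  let F := FIM a b th ph alpha L sigs2 in
  let Ft := F _ Wt in
  let Phit := invmx Ft *m invmx Ft in
  let Qt := Qmx a b th ph alpha L sigs2 Phit in
  let obj1 := fun W : 'M[R[i]]_(Nt, K + Ns) =>
    dc * (\sum_(k < K) rk H sigc2 Wt W k)
    + ds * (\tr (F _ W *m Phit) - 2 * \tr Ft) in
  let obj2 := fun W : 'M[R[i]]_(Nt, K + Ns) =>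
    cr (2 * dc * complex.Re (\tr (lsubmx W *m Sigma1 H sigc2 Wt *m hc H)))
    + cr (ds * complex.Re (\tr (W *m hc W *m Qt)))
    - cr dc * \tr (W *m hc W *m H *m Sigma2 H sigc2 Wt *m hc H) in
  exists c : R, forall W : 'M[R[i]]_(Nt, K + Ns),
    \tr (W *m hc W) = cr Pt -> cr (obj1 W) = obj2 W + cr c.
Proof.
move=> F Ft Phit Qt obj1 obj2.
pose c := dc * \sum_k (ln (1 + xik H sigc2 Wt k) - xik H sigc2 Wt k
                      - betak H sigc2 Wt k * sigc2 k) - ds * (2 * \tr Ft).
exists c => W _.
have hS := sens_link a b th ph alpha L sigs2 Wt W.
have h1 := comm1 H sigc2 Wt W.
have h2 := comm2 H sigc2 Wt W.
have hr : \sum_k rk H sigc2 Wt W k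
  = \sum_k (ln (1 + xik H sigc2 Wt k) - xik H sigc2 Wt k - betak H sigc2 Wt k * sigc2 k)
    + 2 * \sum_k complex.Re (gain H W k k * etak H sigc2 Wt k)
    - \sum_k betak H sigc2 Wt k * (\sum_(j < K) nsq (gain H W k j) + sens_pow H W k).
  rewrite mulr_sumr -big_split -sumrB /=; apply: eq_bigr => k _; rewrite /rk; ring.
rewrite /obj2 h2 h1 /= -hS.
apply: cr_lin.
rewrite /obj1 hr /c.
ring.
Qed.
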